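(* Let $G$ be a connected bipartite graph with at least two vertices, $v\in V(G)$, and let $c_0$ be the mill-pond configuration $MP(v)$ ($c_0(v)=1$, $c_0(x)=0$ for $x\neq v$). Then the configurations of the diffusion process become periodic with period length $2$ after a pre-period of length $\epsilon(v)-1$.
   Context: Diffusion process: for a finite simple graph $G$ and a chip configuration $c_t:V(G)\to\mathbb{Z}$ (negative values allowed), the next configuration is defined simultaneously for every vertex $u$ by $c_{t+1}(u)=c_t(u)-|\{w\in N(u): c_t(u)>c_t(w)\}|+|\{w\in N(u): c_t(u)<c_t(w)\}|$. $\epsilon(v)=\max_{w\in V(G)}d(v,w)$ is the eccentricity of $v$. The period length is the least $p\geq1$ with $c_{t+p}=c_t$ for some $t$, and the pre-period length is the least such $t$ for that $p$. *)

(* Defs.v *)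
From mathcomp Require Import all_boot all_order all_algebra.
Set Implicit Arguments. Unset Strict Implicit. Unset Printing Implicit Defensive.
Import Order.TTheory GRing.Theory Num.Theory.
Local Open Scope ring_scope.

Definition simple_graph (T : finType) (e : rel T) : Prop :=
  symmetric e /\ irreflexive e.

Definition connected_graph (T : finType) (e : rel T) : Prop :=
  forall x y : T, connect e x y.

Definition bipartite (T : finType) (e : rel T) : Prop :=
  exists f : T -> bool, forall x y, e x y -> f x != f y.

Definition walk_of_length (T : finType) (e : rel T) (k : nat) (v w : T) : bool :=
  [exists p : k.-tuple T, path e v p && (last v p == w)].

(* graph distance d(v,w): length of a shortest walk (searched among 0..|V|-1,
   which is exact for connected graphs) *)
Definition dist (T : finType) (e : rel T) (v w : T) : nat :=
  find (fun k => walk_of_length e k v w) (iota 0 #|T|).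

Definition ecc (T : finType) (e : rel T) (v : T) : nat :=
  \max_(w : T) dist e v w.

Definition config (T : finType) := {ffun T -> int}.

Definition diffuse (T : finType) (e : rel T) (c : config T) : config T :=
  [ffun u => c u - (#|[set w | e u w && (c w < c u)]|)%:Z
                 + (#|[set w | e u w && (c u < c w)]|)%:Z].

Definition diffusion (T : finType) (e : rel T) (c0 : config T) (t : nat) : config T :=
  iter t (diffuse e) c0.

Definition millpond (T : finType) (v : T) : config T :=
  [ffun x => if x == v then 1%R else 0%R].

Definition is_period_length (X : Type) (c : nat -> X) (p : nat) : Prop :=
  (1 <= p)%N /\ (exists t, c (t + p)%N = c t) /\
  (forall q, (1 <= q)%N -> (q < p)%N -> forall t, c (t + q)%N <> c t).

Definition is_preperiod_length (X : Type) (c : nat -> X) (p t : nat) : Prop :=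
  c (t + p)%N = c t /\ (forall s, (s < t)%N -> c (s + p)%N <> c s).

(* Main.v *)
Require Import Defs.
From mathcomp Require Import all_boot all_order all_algebra.
From mathcomp Require Import zify.
Set Implicit Arguments. Unset Strict Implicit. Unset Printing Implicit Defensive.
Import Order.TTheory GRing.Theory Num.Theory.

Lemma walkP (T : finType) (e : rel T) k v w :
  reflect (exists p : seq T, [/\ size p = k, path e v p & last v p = w])
          (walk_of_length e k v w).
Proof.
apply: (iffP existsP) => [[p /andP[P /eqP L]] | [p [S P L]]].
  by exists (val p); rewrite size_tuple.
have Sb : size p == k by apply/eqP.
by exists (Tuple Sb); rewrite /= P L eqxx.
Qed.

Lemma walk0 (T : finType) (e : rel T) v w : walk_of_length e 0 v w -> w = v.
Proof. by case/walkP => -[|a p] [//= _ _ <-]. Qed.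

Lemma walkS (T : finType) (e : rel T) k v x y :
  walk_of_length e k v x -> e x y -> walk_of_length e k.+1 v y.
Proof.
case/walkP => p [S P L] exy; apply/walkP; exists (rcons p y).
by rewrite size_rcons rcons_path last_rcons S P L exy.
Qed.

Lemma walkSinv (T : finType) (e : rel T) k v y :
  walk_of_length e k.+1 v y -> exists x, walk_of_length e k v x /\ e x y.
Proof.
case/walkP => p [S P L]; case/lastP: p S P L => [//|p z].
rewrite size_rcons rcons_path last_rcons => -[S] /andP[P exz] <-.
by exists (last v p); split => //; apply/walkP; exists p.
Qed.

Lemma walk_parity (T : finType) (e : rel T) (f : T -> bool) k v x :
  (forall a b, e a b -> f a != f b) ->
  walk_of_length e k v x -> f x = f v (+) odd k.
Proof.
move=> hf; elim: k x => [|k IH] x.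
  by move/walk0 => ->; rewrite addbF.
case/walkSinv => y [/IH Hy /hf]; rewrite Hy /=.
by case: (f x); case: (f v); case: (odd k).
Qed.

Lemma walk_connect (T : finType) (e : rel T) v x :
  connect e v x -> exists2 k, (k < #|T|)%N & walk_of_length e k v x.
Proof.
case/connectP => p P L; case/shortenP: P L => q Q U _ ->.
exists (size q); last by apply/walkP; exists q.
by have := max_card (mem (v :: q)); rewrite (card_uniqP U).
Qed.

Lemma dist_walk (T : finType) (e : rel T) v x : connect e v x ->
  walk_of_length e (dist e v x) v x /\ (dist e v x < #|T|)%N.
Proof.
case/walk_connect => k lk wk.
have H : has (fun k => walk_of_length e k v x) (iota 0 #|T|).
  by apply/hasP; exists k => //; rewrite mem_iota.
have := H; rewrite has_find size_iota => hs; split => //.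
by have := nth_find 0 H; rewrite nth_iota.
Qed.

Lemma dist_min (T : finType) (e : rel T) v x k : connect e v x ->
  walk_of_length e k v x -> (dist e v x <= k)%N.
Proof.
move=> cx wk; have [_ lt] := dist_walk cx.
case: (ltnP k #|T|) => hk; last by apply: ltnW; apply: leq_trans lt hk.
rewrite leqNgt; apply/negP => lkd.
have := before_find 0 lkd; rewrite nth_iota // add0n wk //.
Qed.

Lemma d_v (T : finType) (e : rel T) v : connected_graph e -> dist e v v = 0%N.
Proof.
move=> hc; apply/eqP; rewrite -leqn0; apply: dist_min => //.
by apply/walkP; exists [::].
Qed.

Lemma d_0 (T : finType) (e : rel T) v x : connected_graph e -> dist e v x = 0%N -> x = v.
Proof. by move=> hc h; have [+ _] := dist_walk (hc v x); rewrite h => /walk0. Qed.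

Lemma d_edge (T : finType) (e : rel T) v x y : connected_graph e -> e x y ->
  (dist e v y <= (dist e v x).+1)%N.
Proof.
move=> hc exy; apply: dist_min => //; apply: walkS exy.
by have [] := dist_walk (hc v x).
Qed.

Lemma d_odd (T : finType) (e : rel T) v x y : connected_graph e -> bipartite e -> e x y ->
  odd (dist e v y) = ~~ odd (dist e v x).
Proof.
move=> hc [f hf] exy.
have [wx _] := dist_walk (hc v x); have [wy _] := dist_walk (hc v y).
have := hf _ _ exy; rewrite (walk_parity hf wx) (walk_parity hf wy).
by case: (f v); case: (odd (dist e v x)); case: (odd (dist e v y)).
Qed.

Lemma d_pred (T : finType) (e : rel T) v x k : connected_graph e ->
  dist e v x = k.+1 -> exists y, e y x /\ dist e v y = k.
Proof.
move=> hc hx; have [wx _] := dist_walk (hc v x); rewrite hx in wx.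
case/walkSinv: wx => y [wy eyx]; exists y; split => //.
have := dist_min (hc v y) wy; have := d_edge v hc eyx; rewrite hx; lia.
Qed.

Lemma d_down (T : finType) (e : rel T) v j : connected_graph e ->
  forall k x, dist e v x = (j + k)%N -> exists y, dist e v y = j.
Proof.
move=> hc; elim=> [|k IH] x; first by rewrite addn0 => h; exists x.
by rewrite addnS => /(d_pred hc) [y [_ /IH]].
Qed.
Local Open Scope ring_scope.

Definition deg (T : finType) (e : rel T) (x : T) : nat := #|[set w | e x w]|.

Definition Inv (T : finType) (e : rel T) v (t : nat) (c : config T) : Prop :=
  forall x, if (dist e v x <= t)%N then
     (if odd (t + dist e v x) then (1 - (deg e x)%:Z <= c x) && (c x <= 0)
      else (1 <= c x) && (c x <= (deg e x)%:Z))
  else c x == 0.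

Lemma set_all (T : finType) (e : rel T) x (Q : pred T) :
  (forall w, e x w -> Q w) -> [set w | e x w && Q w] = [set w | e x w].
Proof.
by move=> h; apply/setP => w; rewrite !inE; case E: (e x w) => //=; apply: h.
Qed.

Lemma set_none (T : finType) (e : rel T) x (Q : pred T) :
  (forall w, e x w -> ~~ Q w) -> [set w | e x w && Q w] = set0.
Proof.
move=> h; apply/setP => w; rewrite !inE; case E: (e x w) => //=.
exact/negbTE/h.
Qed.

Lemma nbr (T : finType) (e : rel T) v x w :
  simple_graph e -> connected_graph e -> bipartite e -> e x w ->
  [/\ odd (dist e v w) = ~~ odd (dist e v x),
      (dist e v w <= (dist e v x).+1)%N & (dist e v x <= (dist e v w).+1)%N].
Proof.
move=> [sym _] hc hb exw; split.
- exact: d_odd.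
- exact: d_edge.
- by apply: d_edge; rewrite // sym.
Qed.

Lemma step_formula (T : finType) (e : rel T) v t (c : config T) :
  simple_graph e -> connected_graph e -> bipartite e -> Inv e v t c ->
  forall x, diffuse e c x =
    if (dist e v x <= t)%N then
      (if odd (t + dist e v x) then c x + (deg e x)%:Z else c x - (deg e x)%:Z)
    else (#|[set w | e x w && (dist e v w <= t)%N]|)%:Z.
Proof.
move=> sg hc hb I x; rewrite /diffuse ffunE.
have cx := I x.
move: cx; case: (leqP (dist e v x) t) => hdx cx.
  have par : forall w, e x w -> odd (t + dist e v w) = ~~ odd (t + dist e v x).
    by move=> w /(nbr v sg hc hb) [o _ _]; rewrite !oddD o addbN.
  case ho: (odd (t + dist e v x)); rewrite ho in cx.
    have key : forall w, e x w -> c x < c w.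
      move=> w exw; have [o l1 l2] := nbr v sg hc hb exw.
      have hdt : (dist e v x < t)%N.
        rewrite ltn_neqAle hdx andbT; apply/eqP => E.
        by move: ho; rewrite E oddD addbb.
      have := I w; have -> : (dist e v w <= t)%N by lia.
      rewrite par // ho /=; move: cx; lia.
    rewrite set_none; last by move=> w /key /lt_gtF ->.
    rewrite set_all; last by move=> w /key.
    rewrite cards0 /deg; lia.
  have key : forall w, e x w -> c w < c x.
    move=> w exw; have [o l1 l2] := nbr v sg hc hb exw.
    have := I w; case: leqP => hw.
      by rewrite par // ho /=; move: cx; lia.
    by move: cx; lia.
  rewrite set_all; last by move=> w /key.
  rewrite set_none; last by move=> w /key /lt_gtF ->.
  rewrite cards0 /deg; lia.
rewrite (eqP cx).
rewrite set_none; last first.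
  move=> w exw; have := I w; case: leqP => hw; last by move/eqP ->.
  rewrite oddD; have [o l1 l2] := nbr v sg hc hb exw.
  have -> : dist e v w = t by lia.
  rewrite addbb /=; lia.
rewrite cards0 subr0 add0r.
congr Posz; apply: eq_card => w; rewrite !inE; case E: (e x w) => //=.
have := I w; case: leqP => hw; last by move/eqP ->.
have [o l1 l2] := nbr v sg hc hb E.
have -> : dist e v w = t by lia.
rewrite oddD addbb /=; lia.
Qed.
Local Open Scope ring_scope.

Lemma Inv_step (T : finType) (e : rel T) v t (c : config T) :
  simple_graph e -> connected_graph e -> bipartite e -> Inv e v t c ->
  Inv e v t.+1 (diffuse e c).
Proof.
move=> sg hc hb I x; rewrite (step_formula sg hc hb I).
have cx := I x; move: cx.
case: (leqP (dist e v x) t) => hdx cx.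
  rewrite (leqW hdx) addSn /=.
  by case: (odd (t + dist e v x)) cx => /=; lia.
case: (leqP (dist e v x) t.+1) => hdx2.
  have E : dist e v x = t.+1 by lia.
  rewrite E addSn addnS /= oddD addbb /=.
  apply/andP; split.
    have [y [eyx dy]] := d_pred hc E.
    have : (0 < #|[set w | e x w && (dist e v w <= t)%N]|)%N.
      apply/card_gt0P; exists y; rewrite inE dy leqnn andbT.
      by case: sg => sym _; rewrite sym.
    lia.
  have : (#|[set w | e x w && (dist e v w <= t)%N]| <= deg e x)%N.
    by apply: subset_leq_card; apply/subsetP => w; rewrite !inE => /andP[].
  lia.
rewrite set_none ?cards0 //.
move=> w exw; have [o l1 l2] := nbr v sg hc hb exw; lia.
Qed.

Lemma deg_v (T : finType) (e : rel T) v :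
  simple_graph e -> connected_graph e -> (1 < #|T|)%N -> (0 < deg e v)%N.
Proof.
move=> sg hc hT.
have : (0 < #|predC1 v|)%N by rewrite cardC1; lia.
case/card_gt0P => x; rewrite !inE => xv.
have dx : dist e v x <> 0%N by move/(d_0 hc) => E; rewrite E eqxx in xv.
have [y dy] : exists y, dist e v y = 1%N.
  apply: (d_down (k := (dist e v x).-1) hc (x := x)); lia.
have [z [ezy dz]] := d_pred hc dy.
have zv := d_0 hc dz; subst z.
by apply/card_gt0P; exists y; rewrite inE.
Qed.

Lemma Inv_all (T : finType) (e : rel T) v :
  simple_graph e -> connected_graph e -> bipartite e -> (1 < #|T|)%N ->
  forall t, Inv e v t (diffusion e (millpond v) t).
Proof.
move=> sg hc hb hT; elim=> [|t IH].
  move=> x; rewrite /diffusion /= /millpond ffunE.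
  case: (eqVneq x v) => [->|xv].
    by rewrite d_v //=; have := deg_v v sg hc hT; lia.
  have : dist e v x <> 0%N by move/(d_0 hc) => E; rewrite E eqxx in xv.
  by case: leqP => //; lia.
exact: Inv_step.
Qed.
Local Close Scope ring_scope.

Theorem corollary21 (T : finType) (e : rel T) (v : T) :
  simple_graph e -> connected_graph e -> bipartite e -> (1 < #|T|)%N ->
  is_period_length (diffusion e (millpond v)) 2 /\
  is_preperiod_length (diffusion e (millpond v)) 2 (ecc e v).-1.
Proof.
move=> sg hc hb hT.
set c := diffusion e (millpond v).
have I := Inv_all v sg hc hb hT.
have cS : forall t, c t.+1 = diffuse e (c t) by [].
have SF := step_formula sg hc hb.
have [w0 Hw0] : {w0 : T | ecc e v = dist e v w0}.
  have h0 : (0 < #|T|)%N by lia.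
  by have [w0 H] := @bigop.eq_bigmax T (dist e v) h0; exists w0.
have dle : forall x, (dist e v x <= ecc e v)%N by move=> x; rewrite /ecc; apply: bigop.leq_bigmax.
have ecc1 : (1 <= ecc e v)%N.
  have : (0 < #|predC1 v|)%N by rewrite cardC1; lia.
  case/card_gt0P => x; rewrite !inE => xv.
  have : dist e v x <> 0%N by move/(d_0 hc) => E; rewrite E eqxx in xv.
  have := dle x; lia.
set t0 := (ecc e v).-1.
have Ht0 : ecc e v = t0.+1 by rewrite /t0; lia.
have per : c (t0 + 2)%N = c t0.
  apply/ffunP => x; rewrite addn2.
  have I1 : Inv e v t0.+1 (diffuse e (c t0)) := I t0.+1.
  have I0 : Inv e v t0 (c t0) := I t0.
  change (diffuse e (diffuse e (c t0)) x = c t0 x).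
  rewrite (SF _ _ _ I1) (SF _ _ _ I0).
  have := I t0 x; have := dle x; rewrite Ht0.
  case: (leqP (dist e v x) t0) => h1 h2.
    rewrite (leqW h1) addSn /=.
    case: (odd (t0 + dist e v x)) => _ /=; lia.
  have E : dist e v x = t0.+1 by lia.
  rewrite E leqnn addSn addnS /= oddD addbb /= => /eqP ->.
  rewrite set_all; first by rewrite /deg; lia.
  move=> w exw; have [o l1 l2] := nbr v sg hc hb exw.
  have := dle w; rewrite Ht0 -E => l3.
  have : dist e v w != dist e v x by apply/eqP => E2; move: o; rewrite E2; case: odd.
  lia.
split.
  split => //; split; first by exists t0.
  move=> q q1 q2 t; rewrite /c; have -> : q = 1%N by lia.
  rewrite addn1 => /(congr1 (fun f : config T => f v)).
  have := I t v; have := I t.+1 v; rewrite d_v // !addn0 /=.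

  case: (odd t) => /=; lia.
split => // s hs; rewrite /c.
have [x dx] : exists x, dist e v x = s.+2.
  apply: (d_down (k := (ecc e v - s.+2)%N) hc (x := w0)); rewrite -Hw0; lia.
rewrite addn2 => /(congr1 (fun f : config T => f x)).
have := I s x; have := I s.+2 x.
rewrite dx leqnn (_ : (s.+1 < s)%N = false); last by lia.
rewrite !addnS !addSn /= negbK oddD addbb /=.
move=> /andP[+ _] /eqP; lia.
Qed.
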